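(* Consider the stochastic MPC scheme described in the context: the system $x(k+1)=Ax(k)+Bu(k)+w(k)$ under the control law $u(k)=Ke_0(k)+v_0^*(k)$ resulting from problem $(\mathcal{P}_k)$ (assumed feasible at the time steps considered), with nominal update $z_0(k)=z_1(k-1)$, $z(0)=x(0)$. Then, conditioned on $x(0)$, the predicted error at time $k$ has the same distribution as the closed-loop error, i.e. $e_i(k)\overset{d}{=}e(k+i)$ for $0\le i\le N$, where $e(k)=x(k)-z(k)$ with $z(k)=z_0(k)$.
   Context: System: $x(k+1)=Ax(k)+Bu(k)+w(k)$ with $x(k)\in\mathbb{R}^{n_x}$, $u(k)\in\mathbb{R}^{n_u}$, over a finite horizon $\bar N$; the disturbance sequence $W=[w(0)^\top,\dots,w(\bar N)^\top]^\top$ is a random vector with distribution $\mathcal{D}^W$ (not necessarily i.i.d. or zero mean). $\mathcal{X},\mathcal{U}$ convex sets; $\mathcal{A}\ominus\mathcal{B}=\{a\in\mathcal{A}: a+b\in\mathcal{A}\ \forall b\in\mathcal{B}\}$. A fixed gain $K$ is given; $\mathcal{R}^x_k,\mathcal{R}^u_k$ ($0\le k\le\bar N$) are given sets (probabilistic reachable sets used for tightening) and $\mathcal{Z}_f$ a terminal set. Problem $(\mathcal{P}_k)$ at time $k$: minimize over $v_0,\dots,v_{N-1}$ the cost $\mathbb{E}_{W_k}\big(l_f(x_N)+\sum_{i=0}^{N-1}l_{k+i}(x_i,u_i)\big)$ subject to $x_i=z_i+e_i$, $u_i=Ke_i+v_i$, $z_{i+1}=Az_i+Bv_i$, $e_{i+1}=(A+BK)e_i+w_i$,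 where $W_k=[w_0^\top,\dots,w_N^\top]^\top$ has the conditional distribution of $[w(k)^\top,\dots,w(k+N)^\top]^\top$ given the realized $[w(0)^\top,\dots,w(k-1)^\top]^\top$; constraints $z_i\in\mathcal{X}\ominus\mathcal{R}^x_{i+k}$, $v_i\in\mathcal{U}\ominus\mathcal{R}^u_{i+k}$ ($i=0,\dots,N-1$), $z_N\in\mathcal{Z}_f$; initialization $x_0=x(k)$, $z_0=z_1(k-1)$ (with $z_0(0)=x(0)$), $e_0=x_0-z_0$. Subscript quantities with argument $(k)$, e.g. $e_i(k)$, denote the predicted quantities in problem $(\mathcal{P}_k)$. The applied input is $u(k)=Ke_0(k)+v_0^*(k)$ with $v^*(k)$ optimal for $(\mathcal{P}_k)$. *)

(* Defs.v *)
From HB Require Import structures.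
From mathcomp Require Import all_boot all_order all_algebra.
From mathcomp Require Import all_classical all_reals.
From mathcomp Require Import topology normedtype sequences measure lebesgue_measure
  lebesgue_integral probability kernel.

Unset Printing Implicit Defensive.

Import Order.TTheory GRing.Theory Num.Theory.
Local Open Scope classical_set_scope.
Local Open Scope ring_scope.

(* The vector space R^n, represented by column vectors 'cV[R]_n,      *)
(* equipped with its Borel sigma-algebra (the sigma-algebra generated *)
(* by the coordinate projections, i.e. the product Borel algebra).    *)
Definition vec (R : realType) (n : nat) : Type := 'cV[R]_n.

Section vec_measurable.
Variables (R : realType) (n : nat).

HB.instance Definition _ := Choice.on (vec R n).
HB.instance Definition _ := isPointed.Build (vec R n) (0 : 'cV[R]_n).

Definition vec_coord : 'I_n -> vec R n -> R := fun i v => (v : 'cV[R]_n) i ord0.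

Definition vec_measurable : set (set (vec R n)) := g_sigma_preimage vec_coord.

Lemma vec_measurable0 : vec_measurable set0.
Proof. exact: sigma_algebra0. Qed.

Lemma vec_measurableC A : vec_measurable A -> vec_measurable (~` A).
Proof. exact: sigma_algebraC. Qed.

Lemma vec_measurable_bigcup (F : (set (vec R n))^nat) :
  (forall i, vec_measurable (F i)) -> vec_measurable (\bigcup_i F i).
Proof. exact: sigma_algebra_bigcup. Qed.

HB.instance Definition _ := @isMeasurable.Build default_measure_display
  (vec R n) vec_measurable vec_measurable0 vec_measurableC vec_measurable_bigcup.

End vec_measurable.

Definition pdiff {V : zmodType} (A B : set V) : set V :=
  [set a | A a /\ forall b, B b -> A (a + b)].

Definition convex_vset {R : realType} {m : nat} (C : set 'cV[R]_m) : Prop :=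
  forall a b (t : R), C a -> C b -> 0 <= t <= 1 -> C (t *: a + (1 - t) *: b).

Definition is_cond_distr {R : realType} {d : measure_display} {Omega : measurableType d}
  (P : probability Omega R) {dX dY : measure_display}
  {TX : measurableType dX} {TY : measurableType dY}
  (X : Omega -> TX) (Y : Omega -> TY) (kap : R.-pker TX ~> TY) : Prop :=
  forall (C : set TX) (D : set TY), measurable C -> measurable D ->
    P (X @^-1` C `&` Y @^-1` D) = (\int[P]_(om in X @^-1` C) kap (X om) D)%E.

Definition past {R : realType} {Omega : Type} {nx : nat}
  (w : nat -> Omega -> vec R nx) (k : nat) (om : Omega) : k.-tuple (vec R nx) :=
  [tuple w (nat_of_ord j) om | j < k].

Definition future {R : realType} {Omega : Type} {nx : nat}
  (w : nat -> Omega -> vec R nx) (N k : nat) (om : Omega) : N.+1.-tuple (vec R nx) :=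
  [tuple w (k + nat_of_ord j)%N om | j < N.+1].

Section prediction.
Variables (R : realType) (nx nu : nat).
Variables (A : 'M[R]_nx) (B : 'M[R]_(nx, nu)) (K : 'M[R]_(nu, nx)).

Fixpoint pred_err (e0 : 'cV[R]_nx) (Wk : seq (vec R nx)) (i : nat) : 'cV[R]_nx :=
  match i with
  | 0 => e0
  | i'.+1 => (A + B *m K) *m pred_err e0 Wk i' + nth (0 : 'cV[R]_nx) Wk i'
  end.

Fixpoint pred_nom (z0 : 'cV[R]_nx) (v : nat -> 'cV[R]_nu) (i : nat) : 'cV[R]_nx :=
  match i with
  | 0 => z0
  | i'.+1 => A *m pred_nom z0 v i' + B *m v i'
  end.

Definition mpc_feasible (N k : nat) (X : set 'cV[R]_nx) (U : set 'cV[R]_nu)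
  (Rx : nat -> set 'cV[R]_nx) (Ru : nat -> set 'cV[R]_nu) (Zf : set 'cV[R]_nx)
  (z0 : 'cV[R]_nx) (v : nat -> 'cV[R]_nu) : Prop :=
  (forall i, (i < N)%N ->
     pdiff X (Rx (i + k)%N) (pred_nom z0 v i) /\ pdiff U (Ru (i + k)%N) (v i))
  /\ Zf (pred_nom z0 v N).

(* cost of (P_k): expectation w.r.t. the (conditional) law mu of W_k *)
Definition mpc_cost (N k : nat) (l : nat -> 'cV[R]_nx -> 'cV[R]_nu -> R)
  (lf : 'cV[R]_nx -> R) (mu : {measure set (N.+1.-tuple (vec R nx)) -> \bar R})
  (x0 z0 : 'cV[R]_nx) (v : nat -> 'cV[R]_nu) : \bar R :=
  (\int[mu]_(Wk in setT)
     (lf (pred_nom z0 v N + pred_err (x0 - z0) Wk N)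
      + \sum_(i < N) l (k + i)%N (pred_nom z0 v i + pred_err (x0 - z0) Wk i)
                         (K *m pred_err (x0 - z0) Wk i + v i))%:E)%E.

Definition mpc_optimal (N k : nat) (X : set 'cV[R]_nx) (U : set 'cV[R]_nu)
  (Rx : nat -> set 'cV[R]_nx) (Ru : nat -> set 'cV[R]_nu) (Zf : set 'cV[R]_nx)
  (l : nat -> 'cV[R]_nx -> 'cV[R]_nu -> R) (lf : 'cV[R]_nx -> R)
  (mu : {measure set (N.+1.-tuple (vec R nx)) -> \bar R})
  (x0 z0 : 'cV[R]_nx) (v : nat -> 'cV[R]_nu) : Prop :=
  mpc_feasible N k X U Rx Ru Zf z0 v /\
  forall v', mpc_feasible N k X U Rx Ru Zf z0 v' ->
    (mpc_cost N k l lf mu x0 z0 v <= mpc_cost N k l lf mu x0 z0 v')%E.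

(* Closed loop: returns (x(k), z(k)) with z(k) = z_0(k);               *)
(* vstar k om is the (optimal) input sequence v*(k) computed at time k *)
Fixpoint closed_loop {Omega : Type} (x0 : 'cV[R]_nx)
  (w : nat -> Omega -> vec R nx) (vstar : nat -> Omega -> nat -> 'cV[R]_nu)
  (k : nat) (om : Omega) : 'cV[R]_nx * 'cV[R]_nx :=
  match k with
  | 0 => (x0, x0)
  | k'.+1 =>
    let xz := closed_loop x0 w vstar k' om in
    (A *m xz.1 + B *m (K *m (xz.1 - xz.2) + vstar k' om 0%N) + w k' om,
     A *m xz.2 + B *m vstar k' om 0%N)
  end.

End prediction.

Arguments pred_err {R nx nu} A B K e0 Wk i.
Arguments pred_nom {R nx nu} A B z0 v i.
Arguments mpc_feasible {R nx nu} A B N k X U Rx Ru Zf z0 v.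
Arguments mpc_cost {R nx nu} A B K N k l lf mu x0 z0 v.
Arguments mpc_optimal {R nx nu} A B K N k X U Rx Ru Zf l lf mu x0 z0 v.
Arguments closed_loop {R nx nu} A B K {Omega} x0 w vstar k om.

(* Main.v *)
Require Import Defs.
From HB Require Import structures.
From mathcomp Require Import all_boot all_order all_algebra.
From mathcomp Require Import all_classical all_reals.
From mathcomp Require Import topology normedtype sequences measure lebesgue_measure
  lebesgue_integral probability kernel.
From mathcomp Require Import all_analysis measurable_realfun.

Import Order.TTheory GRing.Theory Num.Theory.
Local Open Scope classical_set_scope.
Local Open Scope ring_scope.
Section disint.
Local Open Scope ereal_scope.
Context (R : realType) d (Omega : measurableType d) (P : probability Omega R)
  d1 d2 (T1 : measurableType d1) (T2 : measurableType d2)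
  (X : Omega -> T1) (Y : Omega -> T2) (kap : R.-pker T1 ~> T2).
Hypothesis mX : measurable_fun setT X.
Hypothesis mY : measurable_fun setT Y.

Definition mu2 (E : set (T1 * T2)) : \bar R :=
  \int[P]_(om in setT) kap (X om) (xsection E (X om)).

Lemma mu2_mfun E : measurable E ->
  measurable_fun setT (fun om => kap (X om) (xsection E (X om))).
Proof.
move=> mE.
have h := @measurable_fun_xsection_finite_kernel _ _ T1 T2 R kap E.
have h' := h (_ : E \in measurable); rewrite inE in h'.
exact: (measurableT_comp (h' mE) mX).
Qed.

Lemma mu2_0 : mu2 set0 = 0.
Proof.
rewrite /mu2; apply: integral0_eq => om _; by rewrite xsection0 measure0.
Qed.

Lemma mu2_ge0 E : 0 <= mu2 E.
Proof. by apply: integral_ge0 => om _. Qed.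

Lemma mu2_sadd : semi_sigma_additive mu2.
Proof.
move=> F mF tF mU.
have -> : mu2 (\bigcup_n F n) =
  \int[P]_(om in setT) \sum_(n <oo) kap (X om) (xsection (F n) (X om)).
  apply: eq_integral => om _; rewrite xsection_bigcup.
  apply/esym/cvg_lim => //; apply: measure_sigma_additive.
    by move=> n; apply: measurable_xsection.
  exact: trivIset_xsection.
rewrite integral_nneseries //; last by move=> n; apply: mu2_mfun.
by apply: is_cvg_nneseries => n _ _; apply: mu2_ge0.
Qed.

HB.instance Definition _ := isMeasure.Build _ _ _ mu2 mu2_0 mu2_ge0 mu2_sadd.


Definition XY (om : Omega) : (T1 * T2)%type := (X om, Y om).

Lemma mXY : measurable_fun setT XY.
Proof. by apply/measurable_fun_pairP; split. Qed.

Definition mu1 (E : set (T1 * T2)) : \bar R := P (XY @^-1` E).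

Lemma mu1_0 : mu1 set0 = 0.
Proof. by rewrite /mu1 preimage_set0 measure0. Qed.

Lemma mu1_ge0 E : 0 <= mu1 E.
Proof. by []. Qed.

Lemma mu1_sadd : semi_sigma_additive mu1.
Proof.
move=> F mF tF mUF; rewrite /mu1 preimage_bigcup.
apply: measure_semi_sigma_additive.
- by move=> n; rewrite -[X in measurable X]setTI; exact: mXY.
- apply/trivIsetP => /= i j _ _ ij; rewrite -preimage_setI.
  by move/trivIsetP : tF => /(_ _ _ _ _ ij) ->//; rewrite preimage_set0.
- by rewrite -preimage_bigcup -[X in measurable X]setTI; exact: mXY.
Qed.

HB.instance Definition _ := isMeasure.Build _ _ _ mu1 mu1_0 mu1_ge0 mu1_sadd.

Hypothesis hc : is_cond_distr P X Y kap.

Lemma disint E : measurable E -> mu1 E = mu2 E.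
Proof.
move=> mE.
apply: (measure_unique [set A `*` B | A in measurable & B in measurable]
  (fun _ => setT)) => //.
- exact: measurable_prod_measurableType.
- move=> _ _ [A mA [B mB <-]] [C mC [D mD <-]].
  rewrite -setXI; exists (A `&` C); first exact: measurableI.
  by exists (B `&` D) => //; exact: measurableI.
- move=> _; exists setT => //; exists setT => //; exact: setXTT.
- by rewrite bigcup_const //; exists 0%N.
- move=> _ [A mA [B mB <-]].
  rewrite -[LHS]/(P (X @^-1` A `&` Y @^-1` B)).
  rewrite -[RHS]/(\int[P]_(om in setT) kap (X om) (xsection (A `*` B) (X om))).
  rewrite hc // integral_mkcond; apply: eq_integral => om _.
  rewrite /patch; case: ifPn => hA.
    by rewrite in_xsectionX // inE; rewrite inE in hA.
  rewrite notin_xsectionX ?measure0 //.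
- move=> _; rewrite -[X in (X < _)%E]/(P (XY @^-1` setT)).
  by rewrite preimage_setT probability_setT ltry.
Qed.
End disint.

Section vecmeas.
Context (R : realType) d (T : measurableType d).

Lemma vec_coord_mfun n (i : 'I_n) :
  measurable_fun setT (fun v : vec R n => (v : 'cV[R]_n) i ord0).
Proof.
move=> _ Y mY; rewrite setTI; apply: sub_sigma_algebra => /=.
rewrite -bigcup_seq/=; exists i => /=; first by rewrite mem_index_enum.
by exists Y => //; rewrite setTI.
Qed.

Lemma vec_mfunP n (f : T -> vec R n) :
  (forall i, measurable_fun setT (fun t => (f t : 'cV[R]_n) i ord0)) ->
  measurable_fun setT f.
Proof.
move=> mf _ A mA; rewrite setTI.
move: A mA; apply: smallest_sub.
  split.
  - by rewrite preimage_set0.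
  - by move=> A mA; rewrite setTD -preimage_setC; apply: measurableC.
  - by move=> F mF; rewrite preimage_bigcup; apply: bigcupT_measurable.
case: n => [|n] in f mf *; first by rewrite big_ord0.
rewrite -bigcup_mkord_ord; apply: bigcup_sub => i Ii.
move=> A [B mB <-].
have -> : inord i = Ordinal Ii :> 'I_n.+1 by apply/val_inj; rewrite /= inordK.
rewrite setTI.
have := mf (Ordinal Ii) measurableT B mB; rewrite setTI.
by [].
Qed.


Lemma mfun_mx_add n m (M : 'M[R]_(n, m)) (f : T -> vec R m) (g : T -> vec R n) :
  measurable_fun setT f -> measurable_fun setT g ->
  measurable_fun setT
    (fun t => (M *m (f t : 'cV[R]_m) + (g t : 'cV[R]_n) : vec R n)).
Proof.
move=> mf mg; apply: vec_mfunP => i.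
have -> : (fun t => ((M *m (f t : 'cV[R]_m) + g t) : 'cV[R]_n) i ord0) =
  (fun t => \sum_(j < m) (M i j * (f t : 'cV_m) j ord0) + (g t : 'cV_n) i ord0).
  by apply: funext => t; rewrite !mxE.
apply: measurable_funD.
  apply: measurable_sum => j; apply: measurable_funM; first exact: measurable_cst.
  exact: (measurableT_comp (vec_coord_mfun _ j) mf).
exact: (measurableT_comp (vec_coord_mfun _ i) mg).
Qed.

Lemma mfun_nth m n (W : T -> n.-tuple (vec R m)) j :
  measurable_fun setT W ->
  measurable_fun setT (fun t => nth (0 : 'cV[R]_m) (W t) j : vec R m).
Proof.
move=> mW; case: (ltnP j n) => hj.
  have -> : (fun t => nth (0 : 'cV[R]_m) (W t) j : vec R m) =
      (fun t => tnth (W t) (Ordinal hj)).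
    by apply: funext => t; rewrite (tnth_nth 0).
  exact: measurableT_comp (measurable_tnth _) mW.
have -> : (fun t => nth (0 : 'cV[R]_m) (W t) j : vec R m) = cst (0 : 'cV[R]_m).
  by apply: funext => t; rewrite nth_default // size_tuple.
exact: measurable_cst.
Qed.

Lemma mfun_pred_err nx nu (A : 'M[R]_nx) (B : 'M[R]_(nx, nu)) (K : 'M[R]_(nu, nx))
  (e0 : T -> vec R nx) n (W : T -> n.-tuple (vec R nx)) i :
  measurable_fun setT e0 -> measurable_fun setT W ->
  measurable_fun setT (fun t => pred_err A B K (e0 t) (W t) i : vec R nx).
Proof.
move=> me mW; elim: i => [|i IH] //=.
by apply: mfun_mx_add => //; apply: mfun_nth.
Qed.

End vecmeas.

Lemma zmod_aux (V : zmodType) (a b c v u : V) :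
  a + (c + v) + u - (b + v) = a - b + c + u.
Proof.
have -> : a + (c + v) + u = (a + c + u) + v by rewrite addrA [a + c + v + u]addrAC.
rewrite opprD addrA [a + c + u + v - b]addrAC addrK.
by rewrite [a + c + u - b]addrAC [a + c - b]addrAC.
Qed.

Section closed.
Context (R : realType) (nx nu : nat) (A : 'M[R]_nx) (B : 'M[R]_(nx, nu))
  (K : 'M[R]_(nu, nx)) (Omega : Type) (x0 : 'cV[R]_nx)
  (w : nat -> Omega -> vec R nx) (vstar : nat -> Omega -> nat -> 'cV[R]_nu).

Let c := closed_loop A B K x0 w vstar.

Lemma cl_err_step j om :
  (c j.+1 om).1 - (c j.+1 om).2 = (A + B *m K) *m ((c j om).1 - (c j om).2) + w j om.
Proof.
rewrite /c /=.
set x := (closed_loop A B K x0 w vstar j om).1.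
set z := (closed_loop A B K x0 w vstar j om).2.
rewrite mulmxDr mulmxA mulmxDl [A *m (x - z)]mulmxBr.
by rewrite zmod_aux.
Qed.

Lemma err_past k j om : (j <= k)%N ->
  (c j om).1 - (c j om).2 = pred_err A B K 0 (past w k om) j.
Proof.
elim: j => [|j IH] hj; first by rewrite /c /= subrr.
rewrite cl_err_step /= IH ?(ltnW hj) //; congr (_ + _).
have h := nth_mktuple (fun j : 'I_k => w (nat_of_ord j) om) 0 (Ordinal hj).
symmetry; exact h.
Qed.

Lemma err_fut N k i om : (i <= N.+1)%N ->
  (c (k + i)%N om).1 - (c (k + i)%N om).2 =
  pred_err A B K ((c k om).1 - (c k om).2) (future w N k om) i.
Proof.
elim: i => [|i IH] hi; first by rewrite addn0.
rewrite addnS cl_err_step /= IH ?(ltnW hi) //; congr (_ + _).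
have h := nth_mktuple (fun j : 'I_N.+1 => w (k + nat_of_ord j)%N om) 0 (Ordinal hi).
symmetry; exact h.
Qed.

End closed.
Theorem lemma1 (R : realType) (nx nu Nbar N : nat)
  (A : 'M[R]_nx) (B : 'M[R]_(nx, nu)) (K : 'M[R]_(nu, nx))
  (X : set 'cV[R]_nx) (U : set 'cV[R]_nu)
  (Rx : nat -> set 'cV[R]_nx) (Ru : nat -> set 'cV[R]_nu) (Zf : set 'cV[R]_nx)
  (l : nat -> 'cV[R]_nx -> 'cV[R]_nu -> R) (lf : 'cV[R]_nx -> R)
  (d : measure_display) (Omega : measurableType d) (P : probability Omega R)
  (w : nat -> Omega -> vec R nx)
  (kap : forall k : nat, R.-pker (k.-tuple (vec R nx)) ~> (N.+1.-tuple (vec R nx)))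
  (x0 : 'cV[R]_nx) (vstar : nat -> Omega -> nat -> 'cV[R]_nu) :
  (0 < N)%N ->
  convex_vset X -> convex_vset U ->
  (forall j, (j <= Nbar)%N -> measurable_fun setT (w j)) ->
  (* W_k has the conditional law kap k given (w(0),...,w(k-1)) *)
  (forall k, (k + N <= Nbar)%N ->
     is_cond_distr P (past w k) (future w N k) (kap k)) ->
  (* closed loop: v*(k) is optimal for the feasible problem (P_k) *)
  (forall k, (k + N <= Nbar)%N -> forall om,
     let xz := closed_loop A B K x0 w vstar k om in
     mpc_optimal A B K N k X U Rx Ru Zf l lf (kap k (past w k om))
       xz.1 xz.2 (vstar k om)) ->
  forall k i, (k + N <= Nbar)%N -> (i <= N)%N ->
  forall S : set (vec R nx), measurable S ->
    let e := fun j om => (closed_loop A B K x0 w vstar j om).1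
                        - (closed_loop A B K x0 w vstar j om).2 in
    P [set om | S (e (k + i)%N om)] =
    (\int[P]_(om in setT)
       kap k (past w k om)
         [set Wk : N.+1.-tuple (vec R nx) | S (pred_err A B K (e k om) Wk i)])%E.
Proof.
move=> N0 cX cU mw hcd hopt k i hk hi S mS e.
have mpst : measurable_fun setT (past w k).
  apply/measurable_fun_tnthP => j.
  rewrite (_ : _ \o _ = w j); last first.
    by apply: funext => om; rewrite /past /= tnth_mktuple.
  apply: mw; apply: (leq_trans (ltnW (ltn_ord j))).
  exact: leq_trans (leq_addr N k) hk.
have mfut : measurable_fun setT (future w N k).
  apply/measurable_fun_tnthP => j.
  rewrite (_ : _ \o _ = w (k + j)%N); last first.
    by apply: funext => om; rewrite /future /= tnth_mktuple.
  apply: mw; apply: leq_trans hk; rewrite leq_add2l.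
  by have := ltn_ord j; rewrite ltnS.
pose E := [set pw : (k.-tuple (vec R nx) * N.+1.-tuple (vec R nx))%type |
  S (pred_err A B K (pred_err A B K 0 pw.1 k) pw.2 i)].
have mE : measurable E.
  have h1 := @mfun_pred_err R _ (k.-tuple (vec R nx) * N.+1.-tuple (vec R nx))%type nx nu A B K (fun _ => 0) k fst k
    (measurable_cst _) measurable_fst.
  have mF := @mfun_pred_err R _ (k.-tuple (vec R nx) * N.+1.-tuple (vec R nx))%type nx nu A B K
    (fun pw : (k.-tuple (vec R nx) * N.+1.-tuple (vec R nx))%type =>
      pred_err A B K 0 pw.1 k) N.+1 snd i h1 measurable_snd.
  by have := mF measurableT S mS; rewrite setTI.
have D := @disint R _ _ P _ _ _ _ (past w k) (future w N k) (kap k) mpst mfut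
  (hcd k hk) E mE.
have -> : P [set om | S (e (k + i)%N om)] =
    P ((fun om => (past w k om, future w N k om)) @^-1` E).
  congr (P _); apply: funext => om.
  rewrite /e /= (@err_fut _ _ _ A B K _ x0 w vstar N k i om) ?(leq_trans hi) //.
  by rewrite (@err_past _ _ _ A B K _ x0 w vstar k k om (leqnn k)).
have -> : (\int[P]_(om in setT)
       kap k (past w k om)
         [set Wk : N.+1.-tuple (vec R nx) | S (pred_err A B K (e k om) Wk i)])%E =
   (\int[P]_(om in setT) kap k (past w k om) (xsection E (past w k om)))%E.
  apply: eq_integral => om _; congr (kap k _ _).
  apply: funext => Wk; rewrite /xsection /= inE /=.
  by rewrite /e /= (@err_past _ _ _ A B K _ x0 w vstar k k om (leqnn k)).
exact: D.
Qed.
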